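(* Let $(V,\rho)$ be an $n$-dimensional irreducible reflection representation of $(W,S)$, $S=\{s_1,\dots,s_k\}$, over a field $\mathbb{F}$ of characteristic $0$, with chosen reflection vectors $\alpha_1,\dots,\alpha_k$, and suppose $I=[n]\subseteq[k]$ is such that $G_I$ is weakly connected and $\{\alpha_1,\dots,\alpha_n\}$ is a basis of $V$. Let $0\le d\le n$ and let $\varphi$ be a $W$-module endomorphism of $\bigwedge^dV$. Then for each $d$-element subset $J=\{i_1,\dots,i_d\}\subseteq I$ there is a scalar $\gamma_J\in\mathbb{F}$ with $\varphi(\alpha_{i_1}\wedge\cdots\wedge\alpha_{i_d})=\gamma_J\,\alpha_{i_1}\wedge\cdots\wedge\alpha_{i_d}$; and if $J'\subseteq I$ is obtained from $J$ by a move in $G_I$, then $\gamma_J=\gamma_{J'}$.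
   Context: A linear map $s:V\to V$ is a (generalized) reflection if it is diagonalizable and $\operatorname{rank}(s-\operatorname{Id}_V)=1$; a reflection vector of $s$ is a nonzero vector in $\operatorname{Im}(s-\operatorname{Id}_V)$. A reflection representation of $(W,S)$ is a finite-dimensional representation with each $\rho(s_i)$ a reflection; $\alpha_i$ is a chosen reflection vector of $s_i$. $W$ acts diagonally on $\bigwedge^dV$. For $I\subseteq[k]$, the digraph $G_I$ has vertex set $I$ and an arrow $i\to j$ ($i\neq j$) iff $s_j\cdot\alpha_i\neq\alpha_i$; weakly connected means connected after forgetting directions. For subsets $J,J'$ of the vertex set, $J'$ is obtained from $J$ by a move if there exist $i\in J$, $j\in J'$ such that $J\setminus\{i\}=J'\setminus\{j\}$ and either $i\to j$ or $j\to i$ is an arrow. *)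

(* Defs.v *)
From HB Require Import structures.
From mathcomp Require Import all_boot all_order all_algebra.
Set Implicit Arguments. Unset Strict Implicit. Unset Printing Implicit Defensive.
Import Order.TTheory GRing.Theory Num.Theory.
Local Open Scope ring_scope.

(* V is modelled as row vectors 'rV[F]_n; a matrix A acts by v |-> v *m A. *)

(* d-element subsets of [n] index the basis of /\^d V. *)
Notation dsub n d := {T : {set 'I_n} | #|T| == d}.
Notation ext F n d := {ffun dsub n d -> F^o}.

Section Defs.
Variable F : fieldType.

Definition is_reflection n (A : 'M[F]_n) : Prop :=
  diagonalizable A /\ \rank (A - 1%:M) = 1%N.

Definition is_reflection_vector n (A : 'M[F]_n) (alpha : 'rV[F]_n) : Prop :=
  alpha != 0 /\ (alpha <= A - 1%:M)%MS.

(* rho(W): matrices that are products of the rho(s_i) and their inverses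
   (W is generated by S). *)
Definition in_rhoW n k (s : 'I_k -> 'M[F]_n) (A : 'M[F]_n) : Prop :=
  exists w : seq ('I_k * bool),
    A = \prod_(p <- w) (if p.2 then s p.1 else invmx (s p.1)).

Definition irreducible_rep n k (s : 'I_k -> 'M[F]_n) : Prop :=
  (0 < n)%N /\
  forall U : 'M[F]_n, (forall A, in_rhoW s A -> (U *m A <= U)%MS) ->
    \rank U = 0%N \/ \rank U = n.


(* Coordinate of v_0 /\ ... /\ v_{d-1} on e_T: the d x d minor with columns T. *)
Definition wedge_coord n d (vs : 'I_d -> 'rV[F]_n) (T : {set 'I_n}) : F :=
  \det (\matrix_(i < d, j < d) nth 0 [seq vs i 0 c | c <- enum T] j).

Definition wedge n d (vs : 'I_d -> 'rV[F]_n) : ext F n d :=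
  [ffun T => wedge_coord vs (val T)].

(* Induced (diagonal) action of A on /\^d V:
   e_{t1} /\ ... /\ e_{td}  |->  (e_{t1} A) /\ ... /\ (e_{td} A). *)
Definition ext_act n d (A : 'M[F]_n) (x : ext F n d) : ext F n d :=
  \sum_(T : dsub n d)
     x T *: wedge (fun i : 'I_d => \row_c nth 0 [seq A r c | r <- enum (val T)] i).

Definition wedge_set n k d (alpha : 'I_k -> 'rV[F]_n) (J : {set 'I_k}) : ext F n d :=
  wedge (fun i : 'I_d => nth 0 [seq alpha j | j <- enum J] i).

Definition arrow n k (s : 'I_k -> 'M[F]_n) (alpha : 'I_k -> 'rV[F]_n) (i j : 'I_k) : bool :=
  (i != j) && (alpha i *m s j != alpha i).

Definition weakly_connected n k (s : 'I_k -> 'M[F]_n) (alpha : 'I_k -> 'rV[F]_n)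
    (I : {set 'I_k}) : Prop :=
  forall i j, i \in I -> j \in I ->
    connect [rel a b | [&& a \in I, b \in I & arrow s alpha a b || arrow s alpha b a]] i j.

Definition move n k (s : 'I_k -> 'M[F]_n) (alpha : 'I_k -> 'rV[F]_n)
    (I J J' : {set 'I_k}) : Prop :=
  exists i j, [/\ i \in J, j \in J', J :\ i = J' :\ j,
                  (i \in I) && (j \in I) &
                  arrow s alpha i j || arrow s alpha j i].

End Defs.

(* Main.v *)
Require Import Defs.
From HB Require Import structures.
From mathcomp Require Import all_boot all_order all_algebra.
From mathcomp Require Import perm.
Import Order.TTheory GRing.Theory Num.Theory.
Local Open Scope ring_scope.
Set Implicit Arguments. Unset Strict Implicit. Unset Printing Implicit Defensive.

Definition tv (X : finType) (x0 : X) (S : {set X}) (j : nat) : X := nth x0 (enum S) j.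

Lemma tv_in (X : finType) x0 (S : {set X}) j : (j < #|S|)%N -> tv x0 S j \in S.
Proof. by move=> h; rewrite /tv -mem_enum; apply: mem_nth; rewrite -cardE. Qed.

Lemma tv_inj (X : finType) x0 (S : {set X}) i j :
  (i < #|S|)%N -> (j < #|S|)%N -> tv x0 S i = tv x0 S j -> i = j.
Proof.
move=> hi hj; rewrite /tv => /eqP; rewrite nth_uniq ?enum_uniq -?cardE //.
by move/eqP.
Qed.

Lemma tv_index (X : finType) x0 (S : {set X}) x : x \in S ->
  (index x (enum S) < #|S|)%N /\ tv x0 S (index x (enum S)) = x.
Proof.
by move=> h; rewrite /tv cardE index_mem mem_enum h nth_index ?mem_enum.
Qed.

Lemma tv_ex (X : finType) x0 (S : {set X}) d x : #|S| = d -> x \in S ->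
  exists a : 'I_d, tv x0 S a = x.
Proof.
move=> hS h; have [h1 h2] := tv_index x0 h.
by rewrite hS in h1; exists (Ordinal h1).
Qed.

Lemma det_row0 (R : comPzRingType) m (A : 'M[R]_m) i :
  (forall j, A i j = 0) -> \det A = 0.
Proof. by move=> h; rewrite (expand_det_row A i) big1 // => j _; rewrite h mul0r. Qed.

Lemma det_expand (R : comPzRingType) d n (X : 'M[R]_(d,n)) (B : 'M[R]_(n,d)) :
  \det (X *m B) = \sum_(f : {ffun 'I_d -> 'I_n})
     (\prod_i X i (f i)) * \det (\matrix_(i,j) B (f i) j).
Proof.
have -> : \det (X *m B) = \sum_(s : 'S_d) \sum_(f : {ffun 'I_d -> 'I_n})
    (-1) ^+ s * \prod_i (X i (f i) * B (f i) (s i)).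
  apply: eq_bigr => s _; rewrite -big_distrr /=; congr (_ * _).
  rewrite -(bigA_distr_bigA (fun i j => X i j * B j (s i))) /=.
  by apply: eq_bigr => i _; rewrite mxE.
rewrite exchange_big; apply: eq_bigr => f _.
rewrite big_distrr /=; apply: eq_bigr => s _; rewrite big_split /=.
rewrite mulrCA; congr (_ * (_ * _)); apply: eq_bigr => i _; by rewrite mxE.
Qed.


Lemma detE (R : comPzRingType) m (M : 'M[R]_m) :
  \det M = \sum_(s : 'S_m) (-1) ^+ s * \prod_i M i (s i).
Proof. by []. Qed.

Lemma CB (R : comPzRingType) n d (x0 : 'I_n) (X : 'M[R]_(d,n)) (B : 'M[R]_(n,d)) :
  \sum_(T : dsub n d) \det (\matrix_(i,j) X i (tv x0 (val T) j)) *
                      \det (\matrix_(i,j) B (tv x0 (val T) i) j) = \det (X *m B).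
Proof.
pose Phi (p : (dsub n d * 'S_d)%type) : {ffun 'I_d -> 'I_n} :=
  [ffun i => tv x0 (val p.1) (p.2 i)].
pose h (f : {ffun 'I_d -> 'I_n}) :=
  (\prod_i X i (f i)) * \det (\matrix_(i,j) B (f i) j).
have cardT (T : dsub n d) : #|val T| = d by apply/eqP; exact: (valP T).
have imPhi p : [set Phi p i | i : 'I_d] = val p.1.
  apply/eqP; rewrite eqEcard; apply/andP; split.
    apply/subsetP => x /imsetP [i _ ->]; rewrite ffunE; apply: tv_in.
    by rewrite cardT.
  rewrite card_imset ?card_ord ?cardT // => i j; rewrite !ffunE => /tv_inj.
  rewrite cardT => /(_ (ltn_ord _) (ltn_ord _)) /val_inj; exact: perm_inj.
have Phi_inj : injective Phi.
  move=> [T s] [T' s'] E.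
  have ET : T = T' by apply: val_inj; rewrite -(imPhi (T, s)) -(imPhi (T', s')) E.
  subst T'; congr (_, _); apply/permP => i.
  move/ffunP: E => /(_ i); rewrite !ffunE /= => /tv_inj.
  by rewrite cardT => /(_ (ltn_ord _) (ltn_ord _)) /val_inj.
rewrite (eq_bigr (fun T => \sum_(s : 'S_d) h (Phi (T, s)))); last first.
  move=> T _; rewrite [X in X * _]detE big_distrl /=; apply: eq_bigr => s _.
  rewrite /h; have -> : \det (\matrix_(i, j) B (Phi (T, s) i) j) =
      (-1) ^+ s * \det (\matrix_(i,j) B (tv x0 (val T) i) j).
    rewrite -det_perm -det_mulmx -row_permE; congr (\det _).
    by apply/matrixP => i j; rewrite !mxE ffunE.
  rewrite mulrA; congr (_ * _); rewrite mulrC; congr (_ * _).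
  by apply: eq_bigr => i _; rewrite !mxE ffunE.
rewrite pair_big /=.
rewrite (eq_bigr (fun p => h (Phi p))); last by case.
rewrite -(big_imset h (in2W Phi_inj)) /=.
rewrite det_expand; symmetry.
rewrite (bigID (fun f => f \in [set Phi x | x in xpredT])) /=.
rewrite [X in _ + X]big1 ?addr0 //.
move=> f Hf; rewrite /h.
case: (boolP (injectiveb f)) => [/injectiveP injf | ninj]; last first.
  case/injectivePn: ninj => i1 [i2 Di12 Ef12].
  by rewrite (determinant_alternate Di12) ?mulr0 // => j; rewrite !mxE Ef12.
exfalso; move/negP: Hf; apply.
pose T0 := [set f i | i : 'I_d].
have cT0 : #|T0| == d by rewrite card_imset ?card_ord.
pose T : dsub n d := exist _ T0 cT0.
have fT i : f i \in T0 by apply/imsetP; exists i.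
have Hidx i : (index (f i) (enum T0) < d)%N.
  have [h1 _] := @tv_index _ x0 T0 (f i) (fT i).
  by move: h1; rewrite (eqP cT0).
pose sf i := Ordinal (Hidx i).
have Hsf i : tv x0 T0 (sf i) = f i.
  by have [_ ->] := @tv_index _ x0 T0 (f i) (fT i).
have sf_inj : injective sf.
  by move=> i j E; apply: injf; rewrite -Hsf E Hsf.
apply/imsetP; exists (T, perm sf_inj) => //.
by apply/ffunP => i; rewrite !ffunE permE /= Hsf.
Qed.


Lemma cardT n d (T : dsub n d) : #|val T| = d.
Proof. by apply/eqP; exact: (valP T). Qed.

Lemma wedgeE (F : fieldType) n d (x0 : 'I_n) (vs : 'I_d -> 'rV[F]_n) (U : dsub n d) :
  wedge vs U = \det (\matrix_(i,j) vs i 0 (tv x0 (val U) j)).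
Proof.
rewrite ffunE /wedge_coord; congr (\det _); apply/matrixP => i j; rewrite !mxE.
by rewrite (nth_map x0) // -cardE cardT.
Qed.

Lemma eq_wedge (F : fieldType) n d (vs vs' : 'I_d -> 'rV[F]_n) :
  (forall i, vs i = vs' i) -> wedge vs = wedge vs'.
Proof.
move=> h; apply/ffunP => U; rewrite !ffunE /wedge_coord; congr (\det _).
by apply/matrixP => i j; rewrite !mxE h.
Qed.

Lemma ffunZE (F : fieldType) (aT : finType) (a : F) (x : {ffun aT -> F^o}) t :
  (a *: x) t = a * x t.
Proof. by rewrite ffunE. Qed.

Lemma ext_actE (F : fieldType) n d (x0 : 'I_n) (A : 'M[F]_n) (x : ext F n d) U :
  ext_act A x U = \sum_(T : dsub n d) x T *
     \det (\matrix_(a < d, b < d) A (tv x0 (val T) a) (tv x0 (val U) b)).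
Proof.
rewrite /ext_act sum_ffunE; apply: eq_bigr => T _; rewrite ffunZE (wedgeE x0).
congr (_ * \det _); apply/matrixP => i j; rewrite !mxE.
by rewrite (nth_map x0) // -cardE cardT.
Qed.

Lemma ext_actD (F : fieldType) n d (A : 'M[F]_n) (x y : ext F n d) :
  ext_act A (x + y) = ext_act A x + ext_act A y.
Proof.
rewrite /ext_act -big_split /=; apply: eq_bigr => T _.
by rewrite ffunE scalerDl.
Qed.

Lemma ext_actZ (F : fieldType) n d (A : 'M[F]_n) (c : F) (x : ext F n d) :
  ext_act A (c *: x) = c *: ext_act A x.
Proof.
rewrite /ext_act scaler_sumr; apply: eq_bigr => T _.
by rewrite ffunZE scalerA.
Qed.

Lemma ext_act0 (F : fieldType) n d (A : 'M[F]_n) : ext_act A (0 : ext F n d) = 0.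
Proof. by have := ext_actZ A 0 (0 : ext F n d); rewrite !scale0r. Qed.

Lemma ext_act_sum (F : fieldType) n d (A : 'M[F]_n) (I : Type) (r : seq I)
  (P : pred I) (G : I -> ext F n d) :
  ext_act A (\sum_(i <- r | P i) G i) = \sum_(i <- r | P i) ext_act A (G i).
Proof.
by apply: (big_morph (ext_act A)); [exact: ext_actD | exact: ext_act0].
Qed.

Lemma ext_act_wedge (F : fieldType) n d (x0 : 'I_n) (A : 'M[F]_n) (vs : 'I_d -> 'rV[F]_n) :
  ext_act A (wedge vs) = wedge (fun i => vs i *m A).
Proof.
apply/ffunP => U; rewrite (ext_actE x0) (wedgeE x0).
pose Xv : 'M[F]_(d,n) := \matrix_(i,c) vs i 0 c.
pose B : 'M[F]_(n,d) := \matrix_(c,b) A c (tv x0 (val U) b).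
rewrite (eq_bigr (fun T : dsub n d => \det (\matrix_(i,j) Xv i (tv x0 (val T) j)) *
                      \det (\matrix_(i,j) B (tv x0 (val T) i) j))); last first.
  move=> T _; rewrite (wedgeE x0); congr (_ * _); congr (\det _);
  by apply/matrixP => i j; rewrite !mxE.
rewrite CB; congr (\det _); apply/matrixP => i j; rewrite !mxE.
by apply: eq_bigr => c _; rewrite !mxE.
Qed.

Lemma ext_actM (F : fieldType) n d (x0 : 'I_n) (A B : 'M[F]_n) (x : ext F n d) :
  ext_act B (ext_act A x) = ext_act (A *m B) x.
Proof.
rewrite [ext_act A x]/ext_act ext_act_sum; apply: eq_bigr => T _.
rewrite ext_actZ (ext_act_wedge x0); congr (_ *: _); apply: eq_wedge => i.
apply/rowP => c; rewrite !mxE.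
have hi : (i < size (enum (val T)))%N by rewrite -cardE cardT.
rewrite (nth_map x0 _ _ hi) mxE; apply: eq_bigr => c' _.
by rewrite !mxE (nth_map x0 _ _ hi).
Qed.

Lemma ext_act1 (F : fieldType) n d (x0 : 'I_n) (x : ext F n d) :
  ext_act 1%:M x = x.
Proof.
apply/ffunP => U; rewrite (ext_actE x0) (bigD1 U) //= big1 ?addr0.
  rewrite (_ : \matrix_(a < d, b < d) _ = 1%:M) ?det1 ?mulr1 //.
  apply/matrixP => a b; rewrite !mxE; congr (_ *+ nat_of_bool _).
  apply/eqP/eqP => [/tv_inj|->//]; rewrite cardT => /(_ (ltn_ord _) (ltn_ord _)).
  exact: val_inj.
move=> T nTU; rewrite (_ : \det _ = 0) ?mulr0 //.
have [t tT tU] : exists2 t, t \in val T & t \notin val U.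
  apply/exists_inP; rewrite -(negbK [exists _ in _, _]) negb_exists_in.
  apply: contra nTU => /forall_inP h; apply/eqP/val_inj/eqP.
  rewrite eqEcard !cardT leqnn andbT; apply/subsetP => y /h; by rewrite negbK.
have [a Ha] := tv_ex x0 (cardT T) tT.
apply: (det_row0 (i := a)) => b; rewrite !mxE Ha.
case: eqP => // E; move: tU; rewrite E tv_in // cardT //.
Qed.


Definition cf (F : fieldType) n d (x0 : 'I_n) (B : 'M[F]_n) (S : {set 'I_n})
  (z : ext F n d) : F :=
  \sum_(T : dsub n d) z T * \det (\matrix_(a < d, b < d) B (tv x0 (val T) a) (tv x0 S b)).

Lemma cf_ext (F : fieldType) n d (x0 : 'I_n) (B : 'M[F]_n) (z : ext F n d) (U : dsub n d) :
  cf x0 B (val U) z = ext_act B z U.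
Proof. by rewrite (ext_actE x0). Qed.

Lemma cf_lin (F : fieldType) n d (x0 : 'I_n) (B : 'M[F]_n) (S : {set 'I_n}) (c : F) (x y : ext F n d) :
  cf x0 B S (c *: x + y) = c * cf x0 B S x + cf x0 B S y.
Proof.
rewrite /cf big_distrr -big_split /=; apply: eq_bigr => T _.
by rewrite !ffunE mulrDl mulrA.
Qed.

Lemma cfZ (F : fieldType) n d (x0 : 'I_n) (B : 'M[F]_n) (S : {set 'I_n}) (c : F) (x : ext F n d) :
  cf x0 B S (c *: x) = c * cf x0 B S x.
Proof.
have := cf_lin x0 B S c x 0; rewrite addr0 => ->.
by rewrite [cf _ _ _ 0]/cf big1 ?addr0 // => T _; rewrite ffunE mul0r.
Qed.

Lemma cfB (F : fieldType) n d (x0 : 'I_n) (B : 'M[F]_n) (S : {set 'I_n}) (x y : ext F n d) :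
  cf x0 B S (x - y) = cf x0 B S x - cf x0 B S y.
Proof.
rewrite -[x - y](addrC) -scaleN1r cf_lin.
by rewrite mulN1r addrC.
Qed.

Lemma cf_sum (F : fieldType) n d (x0 : 'I_n) (B : 'M[F]_n) (S : {set 'I_n}) (I : Type) (r : seq I)
  (P : pred I) (G : I -> ext F n d) :
  cf x0 B S (\sum_(i <- r | P i) G i) = \sum_(i <- r | P i) cf x0 B S (G i).
Proof.
apply: (big_morph (cf x0 B S)).
  by move=> x y; have := cf_lin x0 B S 1 x y; rewrite scale1r mul1r.
by rewrite /cf big1 // => T _; rewrite ffunE mul0r.
Qed.

Lemma cf_act (F : fieldType) n d (x0 : 'I_n) (A B : 'M[F]_n) (S : {set 'I_n}) (z : ext F n d) :
  #|S| = d -> cf x0 B S (ext_act A z) = cf x0 (A *m B) S z.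
Proof.
move=> hS; have hS' : #|S| == d by rewrite hS.
have -> : S = val (exist (fun T : {set 'I_n} => #|T| == d) S hS') by [].
by rewrite !cf_ext (ext_actM x0).
Qed.

Lemma cf_wedge (F : fieldType) n d (x0 : 'I_n) (B : 'M[F]_n) (S : {set 'I_n}) (vs : 'I_d -> 'rV[F]_n) :
  #|S| = d -> cf x0 B S (wedge vs) =
    \det (\matrix_(a < d, b < d) (vs a *m B) 0 (tv x0 S b)).
Proof.
move=> hS; have hS' : #|S| == d by rewrite hS.
have -> : S = val (exist (fun T : {set 'I_n} => #|T| == d) S hS') by [].
by rewrite cf_ext (ext_act_wedge x0) (wedgeE x0).
Qed.

Lemma ext_eq0 (F : fieldType) n d (x : ext F n d) : (forall U, x U = 0) -> x = 0.
Proof. move=> h; apply/ffunP => U. rewrite h. symmetry. exact: (ffunE (fun=> (0 : F^o)) U). Qed.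

Lemma cf_inj (F : fieldType) n d (x0 : 'I_n) (B : 'M[F]_n) (z : ext F n d) :
  B \in unitmx -> (forall S : {set 'I_n}, #|S| = d -> cf x0 B S z = 0) -> z = 0.
Proof.
move=> Bu h.
have e0 : ext_act B z = 0.
  apply: ext_eq0 => U; rewrite -(cf_ext x0); apply: h; apply/eqP; exact: (valP U).
have -> : z = ext_act (B *m invmx B) z by rewrite mulmxV // (ext_act1 x0).
by rewrite -(ext_actM x0) e0 ext_act0.
Qed.

Lemma wedge_mul (F : fieldType) n d (x0 : 'I_n) (G : 'M[F]_d) (vs : 'I_d -> 'rV[F]_n) :
  wedge (fun a => \sum_b G a b *: vs b) = \det G *: wedge vs.
Proof.
apply/ffunP => U; rewrite ffunZE !(wedgeE x0) -det_mulmx; congr (\det _).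
apply/matrixP => a j; rewrite !mxE summxE; apply: eq_bigr => b _.
by rewrite !mxE.
Qed.

Lemma det_rank1 (R : comPzRingType) d (p : 'I_d) (c : 'I_d -> R) :
  \det (\matrix_(a < d, b < d) ((a == b)%:R + (b == p)%:R * c a)) = 1 + c p.
Proof.
rewrite detE (bigD1 (1%g : 'S_d)) //= [X in _ + X]big1 ?addr0.
  rewrite odd_perm1 expr0 mul1r (bigD1 p) //= big1 ?mulr1.
    by rewrite !mxE perm1 !eqxx mul1r.
  by move=> a nap; rewrite !mxE perm1 eqxx (negPf nap) mul0r addr0.
move=> s s1; case: (eqVneq (s p) p) => sp; last first.
  by rewrite (bigD1 p) //= !mxE (negPf sp) eq_sym (negPf sp) mul0r addr0 mul0r mulr0.
have [a sa] : exists a, s a != a.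
  apply/existsP; apply: contraR s1 => /existsPn h; apply/eqP/permP => a.
  by rewrite perm1; apply/eqP; rewrite -[_ == _]negbK h.
have sap : s a != p.
  apply: contra sa => /eqP E.
  have ap : a = p by apply: (@perm_inj _ s); rewrite E sp.
  by rewrite ap sp.
by rewrite (bigD1 a) //= !mxE eq_sym (negPf sa) (negPf sap) mul0r addr0 mul0r mulr0.
Qed.

Lemma wedge_rank1 (F : fieldType) n d (x0 : 'I_n) (p : 'I_d) (c : 'I_d -> F)
  (vs : 'I_d -> 'rV[F]_n) :
  wedge (fun a => vs a + c a *: vs p) = (1 + c p) *: wedge vs.
Proof.
rewrite -(det_rank1 p c) -(wedge_mul x0); apply: eq_wedge => a.
rewrite (eq_bigr (fun b => (a == b)%:R *: vs b + ((b == p)%:R * c a) *: vs b));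
  last by move=> b _; rewrite mxE scalerDl.
rewrite big_split /= (bigD1 a) //= big1 ?addr0; last first.
  by move=> b nba; rewrite eq_sym (negPf nba) scale0r.
rewrite (bigD1 p) //= big1 ?addr0; last first.
  by move=> b nbp; rewrite (negPf nbp) mul0r scale0r.
by rewrite !eqxx !mul1r scale1r.
Qed.


Lemma det_ne0 (F : fieldType) d (D : 'M[F]_d) (a0 p : 'I_d) :
  (forall a, a != a0 -> exists b, D a b != 0 /\ forall a', a' != a -> D a' b = 0) ->
  D a0 p != 0 -> \det D != 0.
Proof.
move=> Hiso Hp; apply/negP => /det0P [v vn0 vD]; move/negP: vn0; apply.
have va a : a != a0 -> v 0 a = 0.
  move=> na; have [b [Dab Hb]] := Hiso a na.
  have : (v *m D) 0 b = 0 by rewrite vD mxE.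
  rewrite mxE (bigD1 a) //= big1 ?addr0; last by move=> a' na'; rewrite Hb ?mulr0.
  by move/eqP; rewrite mulf_eq0 (negPf Dab) orbF => /eqP.
have : (v *m D) 0 p = 0 by rewrite vD mxE.
rewrite mxE (bigD1 a0) //= big1 ?addr0; last by move=> a' na'; rewrite va ?mul0r.
move/eqP; rewrite mulf_eq0 (negPf Hp) orbF => /eqP v0.
apply/eqP/rowP => a; rewrite !mxE; case: (eqVneq a a0) => [->|na]; [exact: v0 | exact: va].
Qed.

Lemma refl_form (F : fieldType) n (A : 'M[F]_n) (a : 'rV[F]_n) c0 :
  is_reflection A -> is_reflection_vector A a -> a 0 c0 != 0 ->
  forall v, v *m A = v + ((v *m (A - 1%:M)) 0 c0 / a 0 c0) *: a.
Proof.
move=> [_ rk] [an0 aA] ac0 v.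
have Aa : (A - 1%:M <= a)%MS.
  move: (mxrank_leqif_eq aA) => [_]; rewrite rk rank_rV an0 eqxx.
  by move/esym/andP => [].
have [k Hk] : exists k, v *m (A - 1%:M) = k *: a.
  by apply/sub_rVP; apply: submx_trans (submxMl v _) Aa.
have -> : v *m A = v + v *m (A - 1%:M) by rewrite mulmxBr mulmx1 addrC subrK.
by rewrite Hk mxE mulfK.
Qed.

Lemma refl_nonunip (F : fieldType) n (A : 'M[F]_n) (a : 'rV[F]_n) (f : 'rV[F]_n -> F) :
  is_reflection A -> (forall v, v *m A = v + f v *: a) -> f a != 0.
Proof.
move=> [dA rk] Hf; apply/negP => /eqP fa0.
have HB v : v *m (A - 1%:M) = f v *: a by rewrite mulmxBr mulmx1 Hf addrC addKr.
have B2 : (A - 1%:M) *m (A - 1%:M) = 0.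
  apply/row_matrixP => r; rewrite row_mul row0.
  have -> : row r (A - 1%:M) = row r 1%:M *m (A - 1%:M) by rewrite -row_mul mul1mx.
  by rewrite (HB (row r 1%:M)) -scalemxAl HB fa0 scale0r scaler0.
case: dA => P Pu /(diagonalizable_forLR Pu) [D AD].
pose E := diag_mx D - 1%:M.
have AQ : A - 1%:M = invmx P *m E *m P.
  rewrite AD /mxpoly.conjmx pinvmxE ?unitmx_inv // invmxK /E.
  by rewrite mulmxBr mulmxBl mulmx1 mulVmx.
have EE : E *m E = 0.
  have : P *m ((A - 1%:M) *m (A - 1%:M)) *m invmx P = 0 by rewrite B2 mulmx0 mul0mx.
  rewrite AQ !mulmxA mulmxV // mul1mx -[_ *m E *m P *m invmx P]mulmxA mulmxV //.
  by rewrite mulmx1 -[_ *m P *m invmx P]mulmxA mulmxV // mulmx1.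
have Eij k l : E k l = (D 0 k - 1) *+ (k == l) by rewrite !mxE mulrnBl.
have Di i : D 0 i - 1 = 0.
  have h : (E *m E) i i = 0 by rewrite EE mxE.
  move: h; rewrite mxE (bigD1 i) //= big1 ?addr0; last first.
    by move=> k nki; rewrite (Eij i k) eq_sym (negPf nki) mulr0n mul0r.
  rewrite !Eij eqxx mulr1n => /eqP; rewrite mulf_eq0 orbb => /eqP.
  done.
have E0 : E = 0.
  by apply/matrixP => i j; rewrite [RHS]mxE Eij Di mul0rn.
by move: rk; rewrite AQ E0 mulmx0 mul0mx mxrank0.
Qed.

Lemma det_ne0' (F : fieldType) d (D : 'M[F]_d) :
  (forall a, exists b, D a b != 0 /\ forall a', a' != a -> D a' b = 0) ->
  \det D != 0.
Proof.
case: d D => [|d] D h; first by rewrite det_mx00 oner_neq0.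
have [p [Hp _]] := h ord0.
apply: (det_ne0 (a0 := ord0) (p := p)) => // a _; exact: h.
Qed.

Lemma rowDZE (F : fieldType) n (u w : 'rV[F]_n) (c : F) t :
  (u + c *: w) 0 t = u 0 t + c * w 0 t.
Proof. by rewrite !mxE. Qed.


Unset Implicit Arguments.

Theorem lemma4p3 (F : fieldType) (n k d : nat)
  (s : 'I_k -> 'M[F]_n) (alpha : 'I_k -> 'rV[F]_n)
  (HF : [pchar F] =i pred0)
  (Hunit : forall i, s i \in unitmx)
  (Hrefl : forall i, is_reflection (s i))
  (Halpha : forall i, is_reflection_vector (s i) (alpha i))
  (Hirr : irreducible_rep s)
  (Hnk : (n <= k)%N)
  (Hconn : weakly_connected s alpha [set i : 'I_k | (i < n)%N])
  (Hbasis : forall c : 'I_k -> F,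
      \sum_(i : 'I_k | (i < n)%N) c i *: alpha i = 0 ->
      forall i : 'I_k, (i < n)%N -> c i = 0)
  (Hd : (d <= n)%N)
  (phi : {linear ext F n d -> ext F n d})
  (Hphi : forall A, in_rhoW s A -> forall x, phi (ext_act A x) = ext_act A (phi x)) :
  exists gamma : {set 'I_k} -> F,
    (forall J : {set 'I_k}, J \subset [set i : 'I_k | (i < n)%N] -> #|J| = d ->
       phi (wedge_set d alpha J) = gamma J *: wedge_set d alpha J) /\
    (forall J J' : {set 'I_k},
       J \subset [set i : 'I_k | (i < n)%N] -> #|J| = d ->
       J' \subset [set i : 'I_k | (i < n)%N] ->
       move s alpha [set i : 'I_k | (i < n)%N] J J' -> gamma J = gamma J').
Proof.
have [Hn0 _] := Hirr.
pose x0 : 'I_n := Ordinal Hn0.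
pose x0k : 'I_k := widen_ord Hnk x0.
set I := [set i : 'I_k | (i < n)%N].
pose wk (m : 'I_n) : 'I_k := widen_ord Hnk m.
pose nk (i : 'I_k) : 'I_n := insubd x0 (val i).
have nkE (i : 'I_k) : (i < n)%N -> val (nk i) = val i by move=> h; rewrite val_insubd h.
have wknk (i : 'I_k) : i \in I -> wk (nk i) = i.
  by rewrite inE => h; apply: val_inj; rewrite /= nkE.
have nkwk (m : 'I_n) : nk (wk m) = m.
  by apply: val_inj; exact: (nkE (wk m) (ltn_ord m)).

have nk_inj : {in I &, injective nk}.
  by move=> i j hi hj E; rewrite -(wknk i hi) -(wknk j hj) E.
have wkI m : wk m \in I by rewrite inE /=.
have wk_inj : injective wk by move=> m1 m2 /(congr1 val) h; apply: val_inj; exact: h.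
have sumI (G : 'I_k -> 'rV[F]_n) :
    \sum_(i : 'I_k | (i < n)%N) G i = \sum_(m : 'I_n) G (wk m).
  rewrite (eq_bigl (fun i => i \in [set wk m | m : 'I_n])); last first.
    move=> i; apply/idP/imsetP => [h|[m _ ->]]; last exact: ltn_ord m.
    by exists (nk i); rewrite ?wknk ?inE.
  by rewrite big_imset //; move=> m1 m2 _ _ /wk_inj.
pose M : 'M[F]_n := \matrix_(m, c) alpha (wk m) 0 c.
have rowM m : row m M = alpha (wk m) by apply/rowP => c; rewrite !mxE.
have Mu : M \in unitmx.
  rewrite unitmxE unitfE; apply/negP => /det0P [v vn0 vM]; move/negP: vn0; apply.
  pose c (i : 'I_k) := v 0 (nk i).
  have hsum : \sum_(i : 'I_k | (i < n)%N) c i *: alpha i = 0.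
    rewrite sumI -[X in _ = X]vM mulmx_sum_row; apply: eq_bigr => m _.
    by rewrite rowM /c nkwk.
  apply/eqP/rowP => m; rewrite mxE; have := Hbasis c hsum (wk m) (ltn_ord m).
  by rewrite /c nkwk.
pose N := invmx M.
have Nu : N \in unitmx by rewrite unitmx_inv.
have aN i c : i \in I -> (alpha i *m N) 0 c = (nk i == c)%:R.
  move=> hi; rewrite -(wknk i hi) -rowM -row_mul mulmxV // !mxE nkwk.
  by [].
pose c0 (i : 'I_k) : 'I_n := odflt x0 [pick c | alpha i 0 c != 0].
have ac0 i : alpha i 0 (c0 i) != 0.
  rewrite /c0; case: pickP => [c //|h].
  exfalso; have [an0 _] := Halpha i; move/negP: an0; apply; apply/eqP/rowP => c.
  by rewrite mxE; move: (h c) => /negbFE/eqP.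
pose f (i : 'I_k) (v : 'rV[F]_n) := (v *m (s i - 1%:M)) 0 (c0 i) / alpha i 0 (c0 i).
have Hf i v : v *m s i = v + f i v *: alpha i := refl_form (Hrefl i) (Halpha i) (ac0 i) v.
have fne i : f i (alpha i) != 0 := refl_nonunip (Hrefl i) (Hf i).
have Hphi1 i x : phi (ext_act (s i) x) = ext_act (s i) (phi x).
  by apply: Hphi; exists [:: (i, true)]; rewrite big_seq1.
have aJE (J : {set 'I_k}) : #|J| = d ->
    wedge_set d alpha J = wedge (fun a : 'I_d => alpha (tv x0k J a)).
  by move=> hJ; apply: eq_wedge => a; rewrite (nth_map x0k) // -cardE hJ.
pose Jn (J : {set 'I_k}) := nk @: J.
have cardJn (J : {set 'I_k}) : J \subset I -> #|Jn J| = #|J|.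
  move=> h; rewrite card_in_imset //; apply: sub_in2 nk_inj; exact/subsetP.
have inJn (J : {set 'I_k}) i : J \subset I -> i \in I -> (nk i \in Jn J) = (i \in J).
  move=> hJ hi; apply/imsetP/idP => [[j jJ E]|iJ]; last by exists i.
  by rewrite (nk_inj _ _ hi (subsetP hJ _ jJ) E).
have tvJ (J : {set 'I_k}) (a : 'I_d) : J \subset I -> #|J| = d -> tv x0k J a \in J.
  by move=> hJ cJ; apply: tv_in; rewrite cJ.
have tvI (J : {set 'I_k}) (a : 'I_d) : J \subset I -> #|J| = d -> tv x0k J a \in I.
  by move=> hJ cJ; apply: (subsetP hJ); apply: tvJ.
have K1 (J L : {set 'I_k}) : J \subset I -> #|J| = d -> L \subset I -> #|L| = d ->
    cf x0 N (Jn L) (wedge_set d alpha J) =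
    \det (\matrix_(a < d, b < d) (nk (tv x0k J a) == tv x0 (Jn L) b)%:R).
  move=> hJ cJ hL cL; rewrite aJE // cf_wedge ?cardJn //.
  congr (\det _); apply/matrixP => a b; rewrite [LHS]mxE [RHS]mxE. by rewrite (aN _ _ (tvI J a hJ cJ)).
have K2 (J L : {set 'I_k}) : J \subset I -> #|J| = d -> L \subset I -> #|L| = d ->
    L != J -> cf x0 N (Jn L) (wedge_set d alpha J) = 0.
  move=> hJ cJ hL cL nLJ; rewrite K1 //.
  have [j jJ jL] : exists2 j, j \in J & j \notin L.
    apply/exists_inP; rewrite -[[exists _ in _, _]]negbK negb_exists_in.
    apply: contra nLJ => /forall_inP h; rewrite eq_sym eqEcard cJ cL leqnn andbT.
    by apply/subsetP => y /h; rewrite negbK.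
  have [a Ha] := tv_ex x0k cJ jJ.
  apply: (det_row0 (i := a)) => b; rewrite !mxE Ha.
  case: eqP => // E; exfalso; move: jL.
  rewrite -(inJn L j hL (subsetP hJ _ jJ)) E tv_in //.
  by rewrite cardJn // cL.
have K3 (J : {set 'I_k}) : J \subset I -> #|J| = d ->
    cf x0 N (Jn J) (wedge_set d alpha J) != 0.
  move=> hJ cJ; rewrite K1 //; apply: det_ne0' => a.
  have hn : nk (tv x0k J a) \in Jn J by rewrite inJn ?tvI ?tvJ.
  have [b Hb] := tv_ex x0 (etrans (cardJn J hJ) cJ) hn.
  exists b; rewrite !mxE Hb eqxx oner_neq0; split => // a' na'.
  rewrite mxE Hb (inj_in_eq nk_inj) ?tvI //; case: eqP => // E; exfalso.
  move/negP: na'; apply; apply/eqP/val_inj.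
  by apply: (tv_inj (x0 := x0k) (S := J) _ _ E); rewrite cJ.
have sN i r c : (s i *m N) r c = N r c + f i (row r 1%:M) * (alpha i *m N) 0 c.
  have -> : (s i *m N) r c = ((row r 1%:M *m s i) *m N) 0 c.
    by rewrite -!row_mul mul1mx [RHS]mxE.
  by rewrite Hf mulmxDl -scalemxAl rowDZE -row_mul mul1mx mxE.
have Kcol (L : {set 'I_k}) i (y : ext F n d) : L \subset I -> #|L| = d -> i \in I -> i \notin L ->
    cf x0 N (Jn L) (ext_act (s i) y) = cf x0 N (Jn L) y.
  move=> hL cL hi niL; have cJn : #|Jn L| = d by rewrite cardJn.
  rewrite (cf_act x0 (s i) N y cJn) /cf; apply: eq_bigr => T _.
  congr (_ * _); congr (\det _); apply/matrixP => a b.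
  rewrite [LHS]mxE [RHS]mxE sN aN //.
  case: eqP => [E|]; last by rewrite mulr0 addr0.
  exfalso; move/negP: niL; apply; rewrite -(inJn L i hL hi) E tv_in //.
  by rewrite cardJn // cL.
have Keig (J : {set 'I_k}) i : J \subset I -> #|J| = d -> i \in J ->
    ext_act (s i) (wedge_set d alpha J) = (1 + f i (alpha i)) *: wedge_set d alpha J.
  move=> hJ cJ iJ; rewrite aJE // (ext_act_wedge x0).
  have [p Hp] := tv_ex x0k cJ iJ.
  rewrite -Hp -(wedge_rank1 x0 p (fun a => f (tv x0k J p) (alpha (tv x0k J a)))).
  by apply: eq_wedge => a; rewrite Hf.
have okS (S : {set 'I_n}) : #|S| = d ->
    [/\ wk @: S \subset I, #|wk @: S| = d & Jn (wk @: S) = S].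
  move=> hS; split.
  - by apply/subsetP => x /imsetP [m _ ->]; exact: wkI.
  - by rewrite card_imset.
  - by rewrite /Jn -imset_comp (eq_imset _ nkwk) imset_id.
have Expand (z : ext F n d) : z = \sum_(K : {set 'I_k} | (K \subset I) && (#|K| == d))
    (cf x0 N (Jn K) z / cf x0 N (Jn K) (wedge_set d alpha K)) *: wedge_set d alpha K.
  apply/eqP; rewrite -subr_eq0; apply/eqP; apply: (cf_inj (x0 := x0) (B := N)) => [//|S hS].
  have [LI cL JnL] := okS S hS.
  rewrite -JnL cfB cf_sum (bigD1 (wk @: S)) ?LI ?cL ?eqxx //= big1 ?addr0.
    by rewrite cfZ divfK ?subrr // K3.
  move=> K /andP [/andP [hK /eqP cK] nKL]; rewrite cfZ (K2 K (wk @: S)) ?mulr0 //.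
  by rewrite eq_sym.
pose gamma (J : {set 'I_k}) :=
  cf x0 N (Jn J) (phi (wedge_set d alpha J)) / cf x0 N (Jn J) (wedge_set d alpha J).
have ClaimA (J : {set 'I_k}) : J \subset I -> #|J| = d ->
    phi (wedge_set d alpha J) = gamma J *: wedge_set d alpha J.
  move=> hJ cJ; apply/eqP; rewrite -subr_eq0; apply/eqP.
  apply: (cf_inj (x0 := x0) (B := N)) => [//|S hS].
  have [LI cL JnL] := okS S hS; rewrite -JnL cfB cfZ.
  case: (eqVneq (wk @: S) J) => [->|nLJ].
    by rewrite /gamma divfK ?subrr // K3.
  rewrite K2 // mulr0 subr0.
  have [i iJ iL] : exists2 i, i \in J & i \notin wk @: S.
    apply/exists_inP; rewrite -[[exists _ in _, _]]negbK negb_exists_in.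
    apply: contra nLJ => /forall_inP h; rewrite eq_sym eqEcard cJ cL leqnn andbT.
    by apply/subsetP => y /h; rewrite negbK.
  have hi : i \in I := subsetP hJ _ iJ.
  have e := Kcol (wk @: S) i (phi (wedge_set d alpha J)) LI cL hi iL.
  move: e; rewrite -Hphi1 Keig // linearZ /= cfZ => /eqP.
  rewrite mulrDl mul1r addrC -subr_eq0 addrK mulf_eq0 (negPf (fne i)) /=.
  by move/eqP.
have ClaimC (J : {set 'I_k}) (z : ext F n d) : J \subset I -> #|J| = d ->
    cf x0 N (Jn J) (phi z) = gamma J * cf x0 N (Jn J) z.
  move=> hJ cJ; rewrite {1}(Expand z) linear_sum cf_sum.
  rewrite (bigD1 J) ?hJ ?cJ ?eqxx //= big1 ?addr0.
    by rewrite linearZ /= ClaimA // !cfZ mulrCA divfK // K3.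
  move=> K /andP [/andP [hK /eqP cK] nKJ].
  rewrite linearZ /= ClaimA // !cfZ (K2 K J) ?mulr0 //.
  by rewrite eq_sym.
have cmove (J J' : {set 'I_k}) i j : #|J| = d -> i \in J -> j \in J' ->
    J :\ i = J' :\ j -> #|J'| = d.
  move=> cJ iJ jJ' Eq; have := cardsD1 i J; have := cardsD1 j J'.
  by rewrite iJ jJ' Eq cJ => -> ->.
have Dmove (J J' : {set 'I_k}) i j : J \subset I -> #|J| = d -> J' \subset I ->
    i \in J -> j \in J' -> J :\ i = J' :\ j -> arrow s alpha i j ->
    gamma J = gamma J'.
  move=> hJ cJ hJ' iJ jJ' Eq /andP [nij aij].
  have hi := subsetP hJ _ iJ; have hj := subsetP hJ' _ jJ'.
  have cJ' := cmove J J' i j cJ iJ jJ' Eq.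
  pose x := ext_act (s j) (wedge_set d alpha J).
  have e1 : cf x0 N (Jn J') (phi x) = gamma J * cf x0 N (Jn J') x.
    by rewrite /x Hphi1 ClaimA // ext_actZ cfZ.
  have e2 := ClaimC J' x hJ' cJ'.
  have nz : cf x0 N (Jn J') x != 0.
    have cJn' : #|Jn J'| = d by rewrite cardJn.
    rewrite /x aJE // (ext_act_wedge x0) (cf_wedge x0 N _ cJn').
    have [a0 Ha0] := tv_ex x0k cJ iJ.
    have njJn : nk j \in Jn J' by rewrite inJn.
    have [p Hp] := tv_ex x0 cJn' njJn.
    have Dent (a b : 'I_d) :
      ((alpha (tv x0k J a) *m s j) *m N) 0 (tv x0 (Jn J') b) =
      (nk (tv x0k J a) == tv x0 (Jn J') b)%:R +
      f j (alpha (tv x0k J a)) * (nk j == tv x0 (Jn J') b)%:R.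
      by rewrite Hf mulmxDl -scalemxAl rowDZE !aN ?tvI.
    apply: (det_ne0 (a0 := a0) (p := p)).
      move=> a na; set g := tv x0k J a.
      have gJ : g \in J := tvJ J a hJ cJ.
      have gi : g != i.
        apply: contra na => /eqP E; apply/eqP/val_inj.
        by apply: (tv_inj (x0 := x0k) (S := J) _ _ (etrans E (esym Ha0))); rewrite cJ.
      have : g \in J' :\ j by rewrite -Eq !inE gi gJ.
      rewrite !inE => /andP [gj gJ'].
      have hg : g \in I := subsetP hJ' _ gJ'.
      have ngJn : nk g \in Jn J' by rewrite inJn.
      have [b Hb] := tv_ex x0 cJn' ngJn.
      have njg : (nk j == nk g) = false.
        by rewrite (inj_in_eq nk_inj) // eq_sym (negPf gj).
      exists b; split.
        by rewrite mxE Dent Hb eqxx njg mulr0 addr0 oner_neq0.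
      move=> a' na'; rewrite mxE Dent Hb njg mulr0 addr0.
      rewrite (inj_in_eq nk_inj) ?tvI //; case: eqP => // E; exfalso.
      move/negP: na'; apply; apply/eqP/val_inj.
      by apply: (tv_inj (x0 := x0k) (S := J) _ _ E); rewrite cJ.
    rewrite mxE Dent Hp Ha0 (inj_in_eq nk_inj) // (negPf nij) add0r eqxx mulr1.
    apply: contra aij => /eqP f0; by rewrite Hf f0 scale0r addr0.
  have : (gamma J - gamma J') * cf x0 N (Jn J') x = 0.
    by rewrite mulrBl -e1 -e2 subrr.
  by move/eqP; rewrite mulf_eq0 (negPf nz) orbF subr_eq0 => /eqP.
exists gamma; split; first exact: ClaimA.
move=> J J' hJ cJ hJ' [i [j [iJ jJ' Eq /andP [hi hj] Har]]].
case/orP: Har => Har; first exact: (Dmove J J' i j hJ cJ hJ' iJ jJ' Eq Har).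
symmetry; apply: (Dmove J' J j i hJ' _ hJ jJ' iJ (esym Eq) Har).
exact: (cmove J J' i j cJ iJ jJ' Eq).
Qed.
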